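(* Let $\mathbf i$ and $\mathbf i'$ be reduced expressions of $w_0$ related by a braid move at positions $k,k+1,k+2$ (i.e. $i_k=i_{k+2}=p$, $i_{k+1}=q$, $i'_k=i'_{k+2}=q$, $i'_{k+1}=p$, $i'_j=i_j$ otherwise, with $p\cdot q=-1$), and assume the standard seed $\mathcal S^{\mathbf i}$ satisfies properties (A), (B), (C). Define $P'_j:=P_{\mathbf s(j)}$ for $j\ne k$, where $\mathbf s$ is the transposition of $k+1$ and $k+2$, and $P'_k:=\tilde P_k/(\beta_{k+1}P_k)$ with $\tilde P_k:=\beta_kP_{\mathrm{in}(k)}$. Then for every $1\le j\le N$, $$P'_jP'_{j_-(\mathbf i')}=\beta'_j\prod_{\substack{l<j<l_+(\mathbf i')\\ i'_l\cdot i'_j=-1}}P'_l,$$ with $P'_0:=1$.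
   Context: $\mathfrak g$ is a complex simple Lie algebra of simply-laced type, vertex set $I=\{1,\dots,n\}$, Cartan entries $i\cdot j$, Weyl group with simple reflections $s_i$, longest element $w_0$, $N=\ell(w_0)$, fundamental weights $\omega_i$. $\overline D:\mathbb C[\mathsf N]\to\mathbb C(\alpha_1,\dots,\alpha_n)$ is the algebra morphism $\overline D(f)=\sum_{\mathbf j}(f,e_{j_1}\cdots e_{j_r})\big(\alpha_{j_1}(\alpha_{j_1}+\alpha_{j_2})\cdots(\alpha_{j_1}+\dots+\alpha_{j_r})\big)^{-1}$ ($\mathbb C[\mathsf N]$ identified with the graded dual of $U(\mathfrak n)$, $e_i$ Chevalley generators, $\alpha_i$ indeterminates). Positive roots are linear forms in the $\alpha_i$; $(\beta;P)$ = multiplicity of $\beta$ in $P$. For a reduced expression $\mathbf i$: $\beta_j=s_{i_1}\cdots s_{i_{j-1}}(\alpha_{i_j})$ (and $\beta'_j$ likewise for $\mathbf i'$); $j_-(\mathbf i)=\max(\{l<j:i_l=i_j\}\cup\{0\})$; $j_+(\mathbf i)=\min(\{l>j:i_l=i_j\}\cup\{N+1\})$; $J_{ex}(\mathbf i)=\{j:j_+\le N\}$; flag minors $x_j=D(s_{i_1}\cdots s_{i_j}\omega_{i_j},\omega_{i_j})$. The quiver $Q^{\mathbf i}$ on $\{1,\dots,N\}$ has an ordinary arrow $u\to v$ iff $i_u\cdot i_v=-1$ and $u<v<u_+<v_+$, and a horizontal arrow $u_+\to u$ for $u\in J_{ex}$; $P_{\mathrm{in}(j)}:=P_{j_+}\prod_{l\in\mathrm{inord}(j)}P_l$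 with $\mathrm{inord}(j)$ the sources of ordinary arrows into $j$. Properties: (A) $\overline D(x_j)=1/P_j$ with $P_j$ a product of positive roots; (B) $P_jP_{j_-}=\beta_j\prod_{l<j<l_+,\,i_l\cdot i_j=-1}P_l$ for all $j$, $P_0=1$; (C) $(\beta_i;P_j)-(\beta_i;P_{j_+})\le1$ for $j\in J_{ex}$, $1\le i\le N$. *)

(* Defs.v *)
From HB Require Import structures.
From mathcomp Require Import all_boot all_order all_algebra all_field.
From mathcomp Require Import mpoly.
Set Implicit Arguments. Unset Strict Implicit. Unset Printing Implicit Defensive.
Import Order.TTheory GRing.Theory Num.Theory.
Local Open Scope ring_scope.

Section Defs.
Variable n : nat.

(* Cartan matrix of a complex simple Lie algebra of simply-laced (ADE) type,
   on the vertex set 'I_n : entries C i j = i . j ; diagonal 2, off-diagonal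
   0 or -1, symmetric, positive definite (finite type), connected (simple). *)
Definition simply_laced_simple_cartan (C : 'M[int]_n) : Prop :=
  [/\ (forall i, C i i = 2),
      (forall i j, i != j -> C i j = 0 \/ C i j = -1),
      (forall i j, C i j = C j i),
      (forall x : 'rV[rat]_n, x != 0 -> 0 < (x *m map_mx intr C *m x^T) 0 0) &
      (forall S : {set 'I_n}, S != set0 -> S != setT ->
         exists i j, [/\ i \in S, j \notin S & C i j = -1])].

(* Elements of the root lattice, as integer coordinate vectors in the basis
   of simple roots alpha_1..alpha_n. *)
Definition sroot (i : 'I_n) : 'rV[int]_n := delta_mx 0 i.

Definition sref (C : 'M[int]_n) (i : 'I_n) (v : 'rV[int]_n) : 'rV[int]_n :=
  v - (\sum_m C i m * v 0 m) *: sroot i.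

Definition wact (C : 'M[int]_n) (w : seq 'I_n) (v : 'rV[int]_n) : 'rV[int]_n :=
  foldr (sref C) v w.

Definition weq (C : 'M[int]_n) (w1 w2 : seq 'I_n) : Prop :=
  forall v, wact C w1 v = wact C w2 v.

Definition reduced (C : 'M[int]_n) (w : seq 'I_n) : Prop :=
  forall w', weq C w' w -> (size w <= size w')%N.

Definition red_w0 (C : 'M[int]_n) (w : seq 'I_n) : Prop :=
  reduced C w /\ forall w', reduced C w' -> (size w' <= size w)%N.

Definition pos_root (C : 'M[int]_n) (v : 'rV[int]_n) : Prop :=
  (exists (w : seq 'I_n) (i : 'I_n), v = wact C w (sroot i)) /\
  (forall m, 0 <= v 0 m).

(* a word of length N is a function on 1..N *)
Definition word (i : nat -> 'I_n) (N : nat) : seq 'I_n :=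
  [seq i l | l <- iota 1 N].

Definition beta (C : 'M[int]_n) (i : nat -> 'I_n) (j : nat) : 'rV[int]_n :=
  wact C (word i j.-1) (sroot (i j)).

(* j_-(i) = max ({l < j : i_l = i_j} u {0}) *)
Definition jminus (i : nat -> 'I_n) (j : nat) : nat :=
  (\max_(1 <= l < j | i l == i j) l)%N.

(* j_+(i) = min ({l > j : i_l = i_j, l <= N} u {N+1}) *)
Definition jplus (i : nat -> 'I_n) (N j : nat) : nat :=
  head N.+1 [seq l <- iota j.+1 (N - j) | i l == i j].

Definition braid (i : nat -> 'I_n) (k : nat) (p q : 'I_n) (j : nat) : 'I_n :=
  if (j == k) || (j == k.+2) then q else if j == k.+1 then p else i j.

Definition ratfun := {fraction {mpoly algC[n]}}.

(* a root, viewed as a linear form in the alpha_i *)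
Definition lin (v : 'rV[int]_n) : ratfun :=
  tofrac (\sum_m (v 0 m)%:~R *: 'X_m : {mpoly algC[n]}).

Definition prodR (s : seq 'rV[int]_n) : ratfun := \prod_(b <- s) lin b.

Definition PP (P : nat -> seq 'rV[int]_n) (j : nat) : ratfun :=
  if j == 0%N then 1 else prodR (P j).

(* P_in(k) = P_{k_+} * prod of P_u over the sources u of ordinary arrows
   u -> k of Q^i (i_u . i_k = -1 and u < k < u_+ < k_+) *)
Definition Pin (C : 'M[int]_n) (i : nat -> 'I_n) (N : nat)
  (P : nat -> seq 'rV[int]_n) (k : nat) : ratfun :=
  PP P (jplus i N k) *
  \prod_(1 <= u < k | (C (i u) (i k) == -1) &&
                      ((k < jplus i N u)%N && (jplus i N u < jplus i N k)%N))
     PP P u.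

Definition sk (k j : nat) : nat :=
  if j == k.+1 then k.+2 else if j == k.+2 then k.+1 else j.

Definition Pnew (C : 'M[int]_n) (i : nat -> 'I_n) (N : nat)
  (P : nat -> seq 'rV[int]_n) (k j : nat) : ratfun :=
  if j == 0%N then 1
  else if j == k then
    (lin (beta C i k) * Pin C i N P k) / (lin (beta C i k.+1) * PP P k)
  else PP P (sk k j).

End Defs.

(* Main.v *)
Require Import Defs.
From HB Require Import structures.
From mathcomp Require Import all_boot all_order all_algebra all_field.
From mathcomp Require Import mpoly.
From mathcomp Require Import zify ring.
Import Order.TTheory GRing.Theory Num.Theory.

Module PA.

Definition Jf (f : pred nat) (N l : nat) : nat :=
  head N.+1 [seq x <- iota l.+1 (N - l) | f x].

Lemma Jf_rec f N l : l < N -> Jf f N l = if f l.+1 then l.+1 else Jf f N l.+1.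
Proof.
move=> lN; rewrite /Jf.
have -> : N - l = (N - l.+1).+1 by rewrite subnS prednK // subn_gt0.
by rewrite /= ; case: (f l.+1).
Qed.

Lemma Jf_ext f g N l : (forall x, l < x -> f x = g x) -> Jf f N l = Jf g N l.
Proof.
move=> fg; rewrite /Jf; congr head; apply: eq_in_filter => x.
by rewrite mem_iota => /andP[lx _]; apply: fg.
Qed.

Lemma Jf_gt f N l : l <= N -> l < Jf f N l.
Proof.
move=> lN; rewrite /Jf.
case E: [seq x <- iota l.+1 (N - l) | f x] => [|y s] /=; first by rewrite ltnS.
have : y \in [seq x <- iota l.+1 (N - l) | f x] by rewrite E mem_head.
by rewrite mem_filter mem_iota => /and3P[_ ].
Qed.

Lemma Jf_spec (f : pred nat) N l m : l < m -> m <= N -> f m ->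
  (Jf f N l == m) = ~~ has f (iota l.+1 (m - l.+1)).
Proof.
move=> lm mN fm.
have [d ed] : exists d, m - l.+1 = d by exists (m - l.+1).
elim: d l lm ed => [|d IH] l lm ed.
  have em : m = l.+1 by apply/eqP; rewrite eqn_leq lm -subn_eq0 ed.
  rewrite Jf_rec; last by rewrite -em.
  by rewrite -em fm eqxx subnn.
rewrite Jf_rec; last by apply: (leq_trans lm).
have lm1 : l.+1 < m by rewrite -subn_gt0 ed.
rewrite ed; have -> : iota l.+1 d.+1 = l.+1 :: iota l.+2 d by [].
rewrite /=; case: (f l.+1) => /=; first by apply/eqP => E; move: lm1; rewrite E ltnn.
by rewrite IH // subnS ed.
Qed.

Definition Mx (f : pred nat) (j : nat) : nat := (\max_(1 <= l < j | f l) l)%N.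

Lemma Mx_lt f j : 0 < j -> Mx f j < j.
Proof.
move=> j0; rewrite /Mx big_nat_cond.
apply: (big_ind (fun x => x < j)) => //.
  by move=> x y xj yj; rewrite gtn_max xj yj.
by move=> l /andP[/andP[_ ->]].
Qed.

Lemma Mx_rec f j : 0 < j -> Mx f j.+1 = if f j then j else Mx f j.
Proof.
move=> j0; rewrite /Mx big_mkcond big_nat_recr //= -big_mkcond.
case: (f j) => /=; last by rewrite maxn0.
by apply/maxn_idPr/ltnW/Mx_lt.
Qed.

Lemma Mx_ext f g j : (forall x, x < j -> f x = g x) -> Mx f j = Mx g j.
Proof.
move=> fg; rewrite /Mx big_nat_cond [RHS]big_nat_cond; apply: eq_bigl => x.
by case/boolP: (1 <= x < j) => //= /andP[_ /fg ->].
Qed.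

Lemma Mx_spec f l m : 0 < l -> l < m ->
  (Mx f m == l) = f l && ~~ has f (iota l.+1 (m - l.+1)).
Proof.
move=> l0 lm; elim: m lm => // m IH.
rewrite ltnS leq_eqVlt => /orP[/eqP<-|lm].
  rewrite Mx_rec // subnn /= andbT; case: (f l) => //=; first by rewrite eqxx.
  by apply/eqP => E; move: (@Mx_lt f l l0); rewrite E ltnn.
rewrite Mx_rec ?(leq_trans l0 (ltnW lm)) //.
have -> : m.+1 - l.+1 = (m - l.+1).+1 by rewrite subSS subnS prednK // subn_gt0.
rewrite -[(m - l.+1).+1]addn1 iotaD has_cat /= orbF.
have -> : l.+1 + (m - l.+1) = m by rewrite subnKC.
case: (f m) => /=; first by rewrite orbT andbF; apply/eqP => E; move: lm; rewrite E ltnn.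
by rewrite orbF IH.
Qed.

End PA.
Import PA.

Module PB.

#[local] Set Default Proof Using "All".
Section Comb.
Variables (n : nat) (i : nat -> 'I_n) (N k : nat) (p q : 'I_n).
Hypotheses (hk1 : 1 <= k) (hkN : k.+2 <= N) (hp1 : i k = p) (hq : i k.+1 = q)
  (hp2 : i k.+2 = p) (pq : p != q).
Let i' := braid i k p q.

Lemma br_out l : l != k -> l != k.+1 -> l != k.+2 -> i' l = i l.
Proof. by rewrite /i' /braid => /negbTE-> /negbTE-> /negbTE->. Qed.
Lemma br_k : i' k = q. Proof. by rewrite /i' /braid eqxx. Qed.
Lemma br_k1 : i' k.+1 = p.
Proof. by rewrite /i' /braid eqxx (gtn_eqF (ltnSn k)) -[k.+2]addn2 -[k.+1]addn1 eqn_add2l. Qed.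
Lemma br_k2 : i' k.+2 = q. Proof. by rewrite /i' /braid eqxx orbT. Qed.
Lemma br_lt l : l < k -> i' l = i l.
Proof.
move=> lk; apply: br_out; apply/eqP; lia.
Qed.
Lemma br_gt l : k.+2 < l -> i' l = i l.
Proof.
move=> lk; apply: br_out; apply/eqP; lia.
Qed.

Let qp : q != p. Proof. by rewrite eq_sym. Qed.

Lemma jplus_far l : k.+2 < l -> jplus i' N l = jplus i N l.
Proof.
move=> lk; rewrite /jplus br_gt //; congr head; apply: eq_in_filter => x.
rewrite mem_iota => /andP[lx _]; rewrite br_gt //; exact: ltn_trans lx.
Qed.

Lemma jplus_k : jplus i N k = k.+2.
Proof.
rewrite /jplus -/(Jf _ N k) Jf_rec; last by apply: leq_trans hkN.
by rewrite hq hp1 (negbTE qp) Jf_rec ?hp2 ?eqxx.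
Qed.
Lemma jplus'_k : jplus i' N k = k.+2.
Proof.
rewrite /jplus -/(Jf _ N k) Jf_rec; last by apply: leq_trans hkN.
by rewrite br_k1 br_k (negbTE pq) Jf_rec ?br_k2 ?eqxx.
Qed.

Lemma jplus'_k1 : jplus i' N k.+1 = jplus i N k.+2.
Proof.
rewrite /jplus -!/(Jf _ N _) Jf_rec // br_k2 br_k1 (negbTE qp) hp2.
apply: Jf_ext => x lx; by rewrite br_gt.
Qed.
Lemma jplus'_k2 : jplus i' N k.+2 = jplus i N k.+1.
Proof.
rewrite /jplus -!/(Jf _ N _) [in RHS]Jf_rec // br_k2 hp2 hq (negbTE pq).
apply: Jf_ext => x lx; by rewrite br_gt.
Qed.

Lemma jplus_k1_gt : k.+2 < jplus i N k.+1.
Proof.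
rewrite /jplus -/(Jf _ N _) Jf_rec // hp2 hq (negbTE pq); exact: Jf_gt.
Qed.
Lemma jplus_k2_gt : k.+2 < jplus i N k.+2.
Proof. rewrite /jplus -/(Jf _ N _); exact: Jf_gt. Qed.

Definition RelC (c : 'I_n) (u v : nat) :=
  [\/ v = u /\ (u < k \/ k.+2 < u), [/\ c = p, u = k & v = k.+1]
    | [/\ c = q, u = k.+1 & v = k]].

Lemma Rel_gen c x : x < k ->
  RelC c (Jf (fun y => i y == c) N x) (Jf (fun y => i' y == c) N x).
Proof.
move=> xk.
have [d ed] : exists d, k.-1 - x = d by eexists.
elim: d x xk ed => [|d IH] x xk ed.
  have ex1 : x.+1 = k by lia.
  have xN : x < N by lia.
  have kN : k < N by lia.
  have k1N : k.+1 < N by lia.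
  rewrite (Jf_rec _ _ _ xN) (Jf_rec _ _ _ xN) ex1 (Jf_rec _ _ _ kN) (Jf_rec _ _ _ kN) (Jf_rec _ _ _ k1N) (Jf_rec _ _ _ k1N).
  rewrite hp1 hq hp2 br_k br_k1 br_k2.
  have E : Jf (fun y => i' y == c) N k.+2 = Jf (fun y => i y == c) N k.+2.
    by apply: Jf_ext => y ly; rewrite br_gt.
  rewrite E; have G := @Jf_gt (fun y => i y == c) N k.+2 hkN.
  case: (eqVneq p c) => [<-|pc]; first by rewrite (negbTE qp); constructor 2; split.
  case: (eqVneq q c) => [<-|qc]; first by constructor 3.
  by constructor 1; split => //; right.
have xk1 : x.+1 < k by lia.
have xN : x < N by lia.
rewrite (Jf_rec _ _ _ xN) (Jf_rec _ _ _ xN) br_lt //; case: (i x.+1 == c); first by constructor 1; split => //; left.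
apply: IH => //; lia.
Qed.

Lemma Rel_l l : l < k -> RelC (i l) (jplus i N l) (jplus i' N l).
Proof. by move=> lk; rewrite /jplus (br_lt _ lk); apply: Rel_gen. Qed.

Let a := jminus i k.+1.
Let b := jminus i k.

Lemma a_def : a = Mx (fun y => i y == q) k.+1.
Proof. by rewrite /a /jminus hq. Qed.
Lemma b_def : b = Mx (fun y => i y == p) k.
Proof. by rewrite /b /jminus hp1. Qed.

Lemma Lab_a l : 0 < l -> l < k -> (l == a) = (i l == q) && (jplus i N l == k.+1).
Proof.
move=> l0 lk; rewrite eq_sym a_def Mx_spec //; last by lia.
case E: (i l == q) => //=.
rewrite /jplus -/(Jf _ N l) (eqP E) Jf_spec ?hq ?eqxx //; lia.
Qed.
Lemma Lab_b l : 0 < l -> l < k -> (l == b) = (i l == p) && (jplus i N l == k).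
Proof.
move=> l0 lk; rewrite eq_sym b_def Mx_spec //.
case E: (i l == p) => //=.
rewrite /jplus -/(Jf _ N l) (eqP E) Jf_spec //; [lia | by rewrite hp1].
Qed.

Lemma a_lt : a < k.
Proof. by rewrite a_def Mx_rec // hp1 (negbTE pq) Mx_lt. Qed.
Lemma b_lt : b < k.
Proof. by rewrite b_def Mx_lt. Qed.

Lemma jm_lt j : j < k -> jminus i' j = jminus i j.
Proof.
move=> jk; rewrite /jminus -!/(Mx _ j) br_lt //; apply: Mx_ext => x xj.
by rewrite br_lt //; apply: ltn_trans jk.
Qed.

Lemma Mx'_k c : Mx (fun y => i' y == c) k = Mx (fun y => i y == c) k.
Proof. by apply: Mx_ext => x xk; rewrite br_lt. Qed.

Lemma jm'_k : jminus i' k = a.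
Proof.
rewrite /jminus -!/(Mx _ _) br_k Mx'_k a_def Mx_rec // hp1 (negbTE pq) //.
Qed.
Lemma jm'_k1 : jminus i' k.+1 = b.
Proof.
rewrite /jminus -!/(Mx _ _) br_k1 Mx_rec // br_k (negbTE qp) Mx'_k b_def //.
Qed.
Lemma jm'_k2 : jminus i' k.+2 = k.
Proof. by rewrite /jminus -!/(Mx _ _) br_k2 Mx_rec // br_k1 (negbTE pq) Mx_rec // br_k eqxx. Qed.
Lemma jm_k2 : jminus i k.+2 = k.
Proof. by rewrite /jminus -!/(Mx _ _) hp2 Mx_rec // hq (negbTE qp) Mx_rec // hp1 eqxx. Qed.

Lemma Mx_far c m : k.+2 < m ->
  Mx (fun y => i' y == c) m = sk k (Mx (fun y => i y == c) m).
Proof.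
elim: m => // m IH; rewrite ltnS leq_eqVlt => /orP[/eqP<-|km].
  rewrite !Mx_rec // br_k2 br_k1 br_k hp2 hq hp1 Mx'_k /sk.
  have L := @Mx_lt (fun y => i y == c) k hk1.
  case: (eqVneq p c) => [<-|pc]; first by rewrite (negbTE qp) eqxx ifN //; apply/eqP; lia.
  have [E|qc] := eqVneq c q; first by subst c; rewrite eqxx.
  by rewrite !ifN //; apply/eqP; lia.
rewrite !Mx_rec; try lia.
rewrite br_gt //; case: (i m == c); last exact: IH.
by rewrite /sk !ifN //; apply/eqP; lia.
Qed.

Lemma jm_gt j : k.+2 < j -> jminus i' j = sk k (jminus i j).
Proof. by move=> kj; rewrite /jminus -!/(Mx _ _) br_gt // Mx_far. Qed.

End Comb.

End PB.
Import PB.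

Module PC.
Local Open Scope ring_scope.

Lemma lin_neq0 n (v : 'rV[int]_n) : v != 0 -> lin v != 0.
Proof.
move=> v0; rewrite /lin tofrac_eq0; apply: contra v0 => /eqP E.
apply/eqP/matrixP => x m0; rewrite ord1 mxE.
have := congr1 (mcoeff U_(m0)) E.
rewrite mcoeff0 raddf_sum /=.
rewrite (bigD1 m0) //= big1 ?addr0.
  by rewrite mcoeffZ mcoeffXU eqxx mulr1 => /eqP; rewrite intr_eq0 => /eqP.
by move=> m /negbTE mm; rewrite mcoeffZ mcoeffXU mm mulr0.
Qed.

Section Refl.
Variables (n : nat) (C : 'M[int]_n) (p q : 'I_n).
Hypotheses (Cpp : C p p = 2) (Cqq : C q q = 2) (Cpq : C p q = -1) (Cqp : C q p = -1).

Definition tl (r : 'I_n) (v : 'rV[int]_n) : int := \sum_m C r m * v 0 m.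

Lemma tl_sroot r j : tl r (sroot j) = C r j.
Proof.
rewrite /tl (bigD1 j) //= big1 ?addr0; first by rewrite /sroot mxE !eqxx mulr1.
by move=> m /negbTE mj; rewrite /sroot mxE mj andbF mulr0.
Qed.

Lemma tl_lin r v w (s : int) : tl r (v + s *: w) = tl r v + s * tl r w.
Proof.
rewrite /tl mulr_sumr -big_split /=; apply: eq_bigr => m _.
by rewrite !mxE mulrDr mulrCA.
Qed.

Definition NF v (x y : int) := v + x *: sroot p + y *: sroot q.

Lemma tl_NF r v x y : tl r (NF v x y) = tl r v + x * C r p + y * C r q.
Proof. by rewrite /NF !tl_lin !tl_sroot. Qed.

Lemma srefp_NF v x y : sref C p (NF v x y) = NF v (x - (tl p v + x * 2 - y)) y.
Proof.
rewrite /sref -/(tl p _) tl_NF Cpp Cpq /NF mulrN1 scalerBl.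
by apply/matrixP => a m; rewrite !mxE; ring.
Qed.

Lemma srefq_NF v x y : sref C q (NF v x y) = NF v x (y - (tl q v - x + y * 2)).
Proof.
rewrite /sref -/(tl q _) tl_NF Cqq Cqp /NF mulrN1 scalerBl.
by rewrite -!addrA.
Qed.

Lemma NF0 v : v = NF v 0 0.
Proof. by rewrite /NF !scale0r !addr0. Qed.
Lemma NFp : sroot p = NF 0 1 0.
Proof. by rewrite /NF scale0r scale1r addr0 add0r. Qed.
Lemma NFq : sroot q = NF 0 0 1.
Proof. by rewrite /NF scale0r scale1r addr0 add0r. Qed.
Lemma tl0 r : tl r 0 = 0.
Proof. by rewrite /tl big1 // => m _; rewrite mxE mulr0. Qed.

Lemma braid_sref v :
  sref C p (sref C q (sref C p v)) = sref C q (sref C p (sref C q v)).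
Proof.
rewrite [v]NF0 !srefp_NF !srefq_NF !srefp_NF !srefq_NF /NF.
set a := tl p v; set b := tl q v.
congr (_ + _ *: _ + _ *: _); lia.
Qed.

Lemma beta_fact1 : sref C p (sref C q (sroot p)) = sroot q.
Proof. by rewrite NFp srefq_NF srefp_NF NFq !tl0 /NF; congr (_ + _ *: _ + _ *: _); lia. Qed.
Lemma beta_fact2 : sref C q (sroot p) = sref C p (sroot q).
Proof. by rewrite NFp NFq srefq_NF srefp_NF !tl0 /NF; congr (_ + _ *: _ + _ *: _); lia. Qed.
Lemma beta_fact3 : sref C q (sref C p (sroot q)) = sroot p.
Proof. by rewrite NFp NFq srefp_NF srefq_NF !tl0 /NF; congr (_ + _ *: _ + _ *: _); lia. Qed.
End Refl.

End PC.
Import PC.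

Module PD.
Local Open Scope ring_scope.
#[local] Set Implicit Arguments.

Lemma extract (R : comNzRingType) (F : nat -> R) (P Q : pred nat) (a k : nat) :
  (a < k)%N -> (forall l, (0 < l < k)%N -> P l = (l == a) || Q l) ->
  ((0 < a)%N -> Q a = false) ->
  \prod_(1 <= l < k | P l) F l = (if a == 0%N then 1 else F a) * \prod_(1 <= l < k | Q l) F l.
Proof.
move=> ak PQ Qa; rewrite !(big_mkcond P) !(big_mkcond Q).
case: (eqVneq a 0%N) => [a0|a0].
  rewrite mul1r; apply: eq_big_nat => l /andP[l0 lk]; rewrite PQ ?l0 ?lk //.
  by rewrite a0 (gtn_eqF l0).
have a1 : (1 <= a)%N by rewrite lt0n.
rewrite (big_cat_nat a1 (ltnW ak)) [in RHS](big_cat_nat a1 (ltnW ak)) /=.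
rewrite (big_ltn ak) [in RHS](big_ltn ak) PQ ?a1 ?ak // eqxx Qa //= mulrCA mul1r.
congr (_ * (_ * _)); apply: eq_big_nat => l /andP[l0 lk].
  by rewrite PQ; [rewrite (ltn_eqF lk) | apply/andP; split; lia].
by rewrite PQ; [rewrite (gtn_eqF l0) | apply/andP; split; lia].
Qed.

Lemma sref_inv n (C : 'M[int]_n) r (Crr : C r r = 2) v : sref C r (sref C r v) = v.
Proof.
rewrite {1}/sref -/(tl _ C r _) /sref -/(tl _ C r v) -scaleNr tl_lin tl_sroot Crr.
by apply/matrixP => a m; rewrite !mxE; ring.
Qed.

Lemma sref0 n (C : 'M[int]_n) r : sref C r 0 = 0.
Proof. by rewrite /sref -/(tl _ C r 0) tl0 scale0r subr0. Qed.

Lemma wact_inj n (C : 'M[int]_n) (Cd : forall x, C x x = 2) w v1 v2 :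
  wact C w v1 = wact C w v2 -> v1 = v2.
Proof.
elim: w => //= x w IH E; apply: IH.
by rewrite -(@sref_inv _ C x (Cd x) (wact C w v1)) E (@sref_inv _ C x (Cd x)).
Qed.

Lemma wact0 n (C : 'M[int]_n) w : wact C w 0 = 0.
Proof. by elim: w => //= x w ->; rewrite sref0. Qed.

Lemma pos_root_neq0 n (C : 'M[int]_n) (Cd : forall x, C x x = 2) b :
  pos_root C b -> b != 0.
Proof.
case=> [[w [j ->]] _]; apply/eqP => /eqP; rewrite -(wact0 C w) => /eqP E.
have := wact_inj C Cd _ _ _ E => /matrixP /(_ 0 j); rewrite /sroot !mxE !eqxx.
done.
Qed.

Lemma PP_neq0 n (C : 'M[int]_n) (Cd : forall x, C x x = 2) (P : nat -> seq 'rV[int]_n) j :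
  (forall b, b \in P j -> pos_root C b) -> PP P j != 0.
Proof.
move=> hA; rewrite /PP; case: ifP => _; first exact: oner_neq0.
rewrite /prodR prodf_seq_neq0; apply/allP => b bP /=.
apply: lin_neq0; exact: (@pos_root_neq0 n C Cd b (hA b bP)).
Qed.

Lemma wact_wordS n (C : 'M[int]_n) f m v :
  wact C (word f m.+1) v = wact C (word f m) (sref C (f m.+1) v).
Proof.
by rewrite /word -[m.+1]addn1 iotaD map_cat /wact foldr_cat add1n addn1.
Qed.

Lemma word_eq n (f g : nat -> 'I_n) m : (forall l, (0 < l <= m)%N -> f l = g l) ->
  word f m = word g m.
Proof.
move=> fg; apply/eq_in_map => l; rewrite mem_iota => /andP[l0 lm]; apply: fg.
by rewrite l0 /=; lia.
Qed.

Lemma wact_word1 n (C : 'M[int]_n) f m v : (0 < m)%N ->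
  wact C (word f m) v = wact C (word f m.-1) (sref C (f m) v).
Proof. by case: m => // m _; rewrite wact_wordS. Qed.
Lemma wact_word2 n (C : 'M[int]_n) f m v : (0 < m)%N ->
  wact C (word f m.+1) v = wact C (word f m.-1) (sref C (f m) (sref C (f m.+1) v)).
Proof. by case: m => // m _; rewrite !wact_wordS. Qed.
Lemma wact_word3 n (C : 'M[int]_n) f m v : (0 < m)%N ->
  wact C (word f m.+2) v =
  wact C (word f m.-1) (sref C (f m) (sref C (f m.+1) (sref C (f m.+2) v))).
Proof. by case: m => // m _; rewrite !wact_wordS. Qed.

Lemma sk1 k : sk k k.+1 = k.+2. Proof. by rewrite /sk eqxx. Qed.
Lemma sk2 k : sk k k.+2 = k.+1.
Proof. by rewrite /sk ifN ?eqxx // -[k.+2]addn2 -[k.+1]addn1 eqn_add2l. Qed.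
Lemma sk_o k m : m != k.+1 -> m != k.+2 -> sk k m = m.
Proof. by rewrite /sk => /negbTE -> /negbTE ->. Qed.
Lemma sk_inv k m : sk k (sk k m) = m.
Proof.
case: (eqVneq m k.+1) => [->|h1]; first by rewrite sk1 sk2.
case: (eqVneq m k.+2) => [->|h2]; first by rewrite sk2 sk1.
by rewrite !sk_o.
Qed.
Lemma sk_neq k m : m != k -> sk k m != k.
Proof.
move=> mk; case: (eqVneq m k.+1) => [->|h1]; first by rewrite sk1; apply/eqP; lia.
case: (eqVneq m k.+2) => [->|h2]; first by rewrite sk2; apply/eqP; lia.
by rewrite sk_o.
Qed.

Lemma split3 (R : comNzRingType) (F : nat -> R) k j : (1 <= k)%N -> (k.+2 < j)%N ->
  \prod_(1 <= l < j) F l =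
  \prod_(1 <= l < k) F l * (F k * (F k.+1 * (F k.+2 * \prod_(k.+3 <= l < j) F l))).
Proof.
move=> k1 kj; have kj' : (k <= j)%N by apply: leq_trans (leq_trans (leqnSn _) (leqnSn _)) (ltnW kj).
rewrite (big_cat_nat k1 kj') (big_ltn (_ : k < j)%N); last by apply: leq_trans kj; rewrite ltnW.
rewrite (big_ltn (_ : k.+1 < j)%N); last by apply: ltn_trans kj.
by rewrite (big_ltn kj).
Qed.

End PD.
Import PD.

Module PG.
Local Open Scope ring_scope.

Section AlgK.
Variables (K : fieldType) (bk bk1 bk2 x0 x1 x2 xa xb Rp Rq : K).
Hypotheses (n0 : x0 != 0) (na : xa != 0) (nb1 : bk1 != 0)
  (hBk : x0 * xb = bk * (xa * Rp))
  (hBk1 : x1 * xa = bk1 * (Rq * x0))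
  (hBk2 : x2 * x0 = bk2 * (Rp * x1)).

Let xb_eq : xb = bk * (xa * Rp) / x0.
Proof. by apply: (mulfI n0); rewrite hBk; field. Qed.
Let x1_eq : x1 = bk1 * (Rq * x0) / xa.
Proof. by apply: (mulIf na); rewrite hBk1; field. Qed.
Let x2_eq : x2 = bk2 * (Rp * x1) / x0.
Proof. by apply: (mulIf n0); rewrite hBk2; field. Qed.

Lemma alg_k : bk * (x2 * xa) / (bk1 * x0) * xa = bk2 * (xb * Rq).
Proof. rewrite x2_eq x1_eq xb_eq; field; rewrite ?n0 ?na ?nb1 //. Qed.
Lemma alg_k1 : x2 * xb = bk1 * (Rp * (bk * (x2 * xa) / (bk1 * x0))).
Proof. rewrite xb_eq; field; rewrite ?n0 ?na ?nb1 //. Qed.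
Lemma alg_k2 : x1 * (bk * (x2 * xa) / (bk1 * x0)) = bk * (Rq * x2).
Proof. rewrite x1_eq; field; rewrite ?n0 ?na ?nb1 //. Qed.
End AlgK.

End PG.
Import PG.

Local Open Scope ring_scope.


Theorem proposition6p8 (n : nat) (C : 'M[int]_n)
  (hC : simply_laced_simple_cartan C)
  (N : nat) (i : nat -> 'I_n) (hi : red_w0 C (word i N))
  (k : nat) (p q : 'I_n)
  (hk1 : (1 <= k)%N) (hkN : (k.+2 <= N)%N)
  (hp1 : i k = p) (hq : i k.+1 = q) (hp2 : i k.+2 = p)
  (hpq : C p q = -1)
  (P : nat -> seq 'rV[int]_n)
  (* (A): each P_j is a product of positive roots *)
  (hA : forall j, (1 <= j <= N)%N -> forall b, b \in P j -> pos_root C b)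
  (* (B) *)
  (hB : forall j, (1 <= j <= N)%N ->
     PP P j * PP P (jminus i j) =
     lin (beta C i j) *
     \prod_(1 <= l < j | (j < jplus i N l)%N && (C (i l) (i j) == -1)) PP P l)
  (* (C) *)
  (hCC : forall j, (1 <= j <= N)%N -> (jplus i N j <= N)%N ->
     forall m, (1 <= m <= N)%N ->
     (count_mem (beta C i m) (P j) <= (count_mem (beta C i m) (P (jplus i N j))).+1)%N) :
  let i' := braid i k p q in
  forall j, (1 <= j <= N)%N ->
    Pnew C i N P k j * Pnew C i N P k (jminus i' j) =
    lin (beta C i' j) *
    \prod_(1 <= l < j | (j < jplus i' N l)%N && (C (i' l) (i' j) == -1))
       Pnew C i N P k l.
Proof.
move=> i' j /andP[j1 jN]; rewrite /i' {i'}.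
case: hC => Cd Coff Csym _ _.
have Cqp : C q p = -1 by rewrite Csym.
have pq : p != q by apply/eqP => E; move: hpq; rewrite E Cd.
have qp : q != p by rewrite eq_sym.
have Cpp := Cd p; have Cqq := Cd q.
pose X := (hk1, hkN, hp1, hq, hp2, pq).
have br_lt' := br_lt _ _ _ _ _ _ hk1 hkN hp1 hq hp2 pq.
have br_gt' := br_gt _ _ _ _ _ _ hk1 hkN hp1 hq hp2 pq.
have br_k' := br_k _ _ _ _ _ _ hk1 hkN hp1 hq hp2 pq.
have br_k1' := br_k1 _ _ _ _ _ _ hk1 hkN hp1 hq hp2 pq.
have br_k2' := br_k2 _ _ _ _ _ _ hk1 hkN hp1 hq hp2 pq.
set F := PP P.
have Fnz : forall m, (m <= N)%N -> F m != 0.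
  move=> m mN; case: (posnP m) => [->|m0]; first by rewrite /F /PP eqxx oner_neq0.
  by apply: (@PP_neq0 _ C Cd P m) => b; apply: hA; rewrite m0 mN.
have F0 : F 0%N = 1 by rewrite /F /PP eqxx.
have sk_id : forall m, m != k.+1 -> m != k.+2 -> sk k m = m.
  by move=> m /negbTE h1 /negbTE h2; rewrite /sk h1 h2.
have Pnew_id : forall m, m != k -> Pnew C i N P k m = F (sk k m).
  move=> m mk; rewrite /Pnew (negbTE mk); case: eqP => [->|_] //.
have Wlt : forall m, (m < k)%N -> word (braid i k p q) m = word i m.
  by move=> m mk; apply: word_eq => l /andP[_ lm]; apply: br_lt'; lia.
have Wgt : forall m, (k.+2 <= m)%N -> forall v,
    wact C (word (braid i k p q) m) v = wact C (word i m) v.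
  elim=> // m IH; rewrite leq_eqVlt => /orP[/eqP em|km] v.
    have -> : m = k.+1 by case: em.
    rewrite (wact_word3 _ _ _ _ hk1) (wact_word3 _ _ _ _ hk1) br_k' br_k1' br_k2' hp1 hq hp2.
    by rewrite Wlt ?ltn_predL // (braid_sref _ _ _ _ Cpp Cqq hpq Cqp).
  by rewrite !wact_wordS br_gt' // IH.
have beta_lt : forall m, (m < k)%N -> beta C (braid i k p q) m = beta C i m.
  by move=> m mk; rewrite /beta Wlt ?br_lt' //; lia.
have beta_gt : forall m, (k.+2 < m)%N -> beta C (braid i k p q) m = beta C i m.
  by move=> m mk; rewrite /beta Wgt ?br_gt' //; lia.
have Wk1 : word (braid i k p q) k.-1 = word i k.-1 by rewrite Wlt // ltn_predL.
have beta_k : beta C (braid i k p q) k = beta C i k.+2.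
  rewrite /beta (wact_word2 _ _ _ _ hk1) hp1 hq Wk1 br_k'.
  by rewrite hp2 (beta_fact1 _ _ _ _ Cpp Cqq hpq Cqp).
have beta_k1 : beta C (braid i k p q) k.+1 = beta C i k.+1.
  rewrite /beta (wact_word1 _ _ _ _ hk1) [in RHS](wact_word1 _ _ _ _ hk1) hp1 hq Wk1 br_k' br_k1'.
  by rewrite (beta_fact2 _ _ _ _ Cpp Cqq hpq Cqp).
have beta_k2 : beta C (braid i k p q) k.+2 = beta C i k.
  rewrite /beta (wact_word2 _ _ _ _ hk1) hp1 Wk1 br_k' br_k1' br_k2'.
  by rewrite (beta_fact3 _ _ _ _ Cpp Cqq hpq Cqp).
have Rel_l' := Rel_l _ _ _ _ _ _ hk1 hkN hp1 hq hp2 pq.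
have Lab_a' := Lab_a _ _ _ _ _ _ hk1 hkN hp1 hq hp2 pq.
have Lab_b' := Lab_b _ _ _ _ _ _ hk1 hkN hp1 hq hp2 pq.
have a_lt' := a_lt _ _ _ _ _ _ hk1 hkN hp1 hq hp2 pq.
have b_lt' := b_lt _ _ _ _ _ _ hk1 hkN hp1 hq hp2 pq.
have jplus_k' := jplus_k _ _ _ _ _ _ hk1 hkN hp1 hq hp2 pq.
set a := jminus i k.+1 in Lab_a' a_lt' *.
set b := jminus i k in Lab_b' b_lt' *.
have Fa : (if a == 0%N then 1 else F a) = F a by rewrite /F /PP; case: eqP.
have Fb : (if b == 0%N then 1 else F b) = F b by rewrite /F /PP; case: eqP.
have Pin_eq : Pin C i N P k = F k.+2 * F a.
  rewrite /Pin jplus_k' (@extract _ F _ pred0 a k a_lt'); first by rewrite big_pred0 // mulr1 Fa.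
    move=> l /andP[l0 lk]; rewrite (Lab_a' l l0 lk) hp1 /=.
    case: (Rel_l' l lk) => [[E [HH|HH]]|[E0 E1 E2]|[E0 E1 E2]];
      rewrite ?E0 ?E1 ?E2 ?Cpp ?Cqq ?Cpq ?Cqp ?eqxx ?(negbTE pq) ?(negbTE qp) /=; lia.
  move=> a0 //.
set Rp := \prod_(1 <= l < k | (k.+2 < jplus i N l)%N && (C (i l) p == -1)) F l.
set Rq := \prod_(1 <= l < k | (k.+2 < jplus i N l)%N && (C (i l) q == -1)) F l.
have jaN : (a <= N)%N by lia.
have jbN : (b <= N)%N by lia.
have Ja : (0 < a)%N -> jplus i N a = k.+1.
  by move=> a0; have := Lab_a' a a0 a_lt'; rewrite eqxx => /esym/andP[_ /eqP].
have Jb : (0 < b)%N -> jplus i N b = k.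
  by move=> b0; have := Lab_b' b b0 b_lt'; rewrite eqxx => /esym/andP[_ /eqP].
have H1 : \prod_(1 <= l < k | (k < jplus i N l)%N && (C (i l) p == -1)) F l = F a * Rp.
  rewrite (@extract _ F _ (fun l => (k.+2 < jplus i N l)%N && (C (i l) p == -1)) a k a_lt') ?Fa //.
    move=> l /andP[l0 lk]; rewrite (Lab_a' l l0 lk).
    case: (Rel_l' l lk) => [[E [HH|HH]]|[E0 E1 E2]|[E0 E1 E2]];
      rewrite ?E ?E0 ?E1 ?E2 ?Cpp ?Cqq ?Cpq ?Cqp ?eqxx ?(negbTE pq) ?(negbTE qp) /=; lia.
  by move=> a0; rewrite Ja //; lia.
have H2 : \prod_(1 <= l < k | (k.+1 < jplus i N l)%N && (C (i l) q == -1)) F l = Rq.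
  rewrite big_nat_cond [RHS]big_nat_cond; apply: eq_bigl => l.
  case/boolP: (1 <= l < k)%N => //= /andP[l0 lk]; rewrite ?andbT.
  case: (Rel_l' l lk) => [[E [HH|HH]]|[E0 E1 E2]|[E0 E1 E2]];
      rewrite ?E ?E0 ?E1 ?E2 ?Cpp ?Cqq ?Cpq ?Cqp ?eqxx ?(negbTE pq) ?(negbTE qp) /=; lia.
have Hconv : forall (f : 'I_n -> nat -> bool),
    \prod_(1 <= l < k | f (braid i k p q l) l) Pnew C i N P k l =
    \prod_(1 <= l < k | f (i l) l) F l.
  move=> f; rewrite big_mkcond [RHS]big_mkcond; apply: eq_big_nat => l /andP[l0 lk].
  by rewrite br_lt' // Pnew_id ?sk_id //; apply/eqP; lia.
have H4 : \prod_(1 <= l < k | (k < jplus (braid i k p q) N l)%N &&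
              (C (braid i k p q l) q == -1)) Pnew C i N P k l = F b * Rq.
  rewrite (Hconv (fun c l => (k < jplus (braid i k p q) N l)%N && (C c q == -1))).
  rewrite (@extract _ F _ (fun l => (k.+2 < jplus i N l)%N && (C (i l) q == -1)) b k b_lt') ?Fb //.
    move=> l /andP[l0 lk]; rewrite (Lab_b' l l0 lk).
    case: (Rel_l' l lk) => [[E [HH|HH]]|[E0 E1 E2]|[E0 E1 E2]];
      rewrite ?E ?E0 ?E1 ?E2 ?Cpp ?Cqq ?Cpq ?Cqp ?eqxx ?(negbTE pq) ?(negbTE qp) /=; lia.
  by move=> b0; rewrite Jb //; lia.
have H5 : \prod_(1 <= l < k | (k.+1 < jplus (braid i k p q) N l)%N &&
              (C (braid i k p q l) p == -1)) Pnew C i N P k l = Rp.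
  rewrite (Hconv (fun c l => (k.+1 < jplus (braid i k p q) N l)%N && (C c p == -1))).
  rewrite big_nat_cond [RHS]big_nat_cond; apply: eq_bigl => l.
  case/boolP: (1 <= l < k)%N => //= /andP[l0 lk]; rewrite ?andbT.
  case: (Rel_l' l lk) => [[E [HH|HH]]|[E0 E1 E2]|[E0 E1 E2]];
      rewrite ?E ?E0 ?E1 ?E2 ?Cpp ?Cqq ?Cpq ?Cqp ?eqxx ?(negbTE pq) ?(negbTE qp) /=; lia.
have H6 : \prod_(1 <= l < k | (k.+2 < jplus (braid i k p q) N l)%N &&
              (C (braid i k p q l) q == -1)) Pnew C i N P k l = Rq.
  rewrite (Hconv (fun c l => (k.+2 < jplus (braid i k p q) N l)%N && (C c q == -1))).
  rewrite big_nat_cond [RHS]big_nat_cond; apply: eq_bigl => l.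
  case/boolP: (1 <= l < k)%N => //= /andP[l0 lk]; rewrite ?andbT.
  case: (Rel_l' l lk) => [[E [HH|HH]]|[E0 E1 E2]|[E0 E1 E2]];
      rewrite ?E ?E0 ?E1 ?E2 ?Cpp ?Cqq ?Cpq ?Cqp ?eqxx ?(negbTE pq) ?(negbTE qp) /=; lia.
have hBk : F k * F b = lin (beta C i k) * (F a * Rp).
  have := hB k; rewrite -/F -/b hp1 H1; apply; lia.
have jplus_k1_gt' := jplus_k1_gt _ _ _ _ _ _ hk1 hkN hp1 hq hp2 pq.
have hBk1 : F k.+1 * F a = lin (beta C i k.+1) * (Rq * F k).
  have := hB k.+1; rewrite -/F -/a hq big_mkcond big_nat_recr //= -big_mkcond.
  rewrite jplus_k' hp1 hpq ltnSn eqxx /= H2; apply; lia.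
have jm_k2' := jm_k2 _ _ _ _ _ _ hk1 hkN hp1 hq hp2 pq.
have hBk2 : F k.+2 * F k = lin (beta C i k.+2) * (Rp * F k.+1).
  have := hB k.+2; rewrite -/F jm_k2' hp2 big_mkcond big_nat_recr //= big_nat_recr //= -big_mkcond.
  rewrite jplus_k' hp1 hq Cqp jplus_k1_gt' ltnn eqxx /= mulr1; apply; lia.
have k0 : (k == 0%N) = false by lia.
have Pk_eq : Pnew C i N P k k = lin (beta C i k) * (F k.+2 * F a) / (lin (beta C i k.+1) * F k).
  by rewrite /Pnew k0 eqxx Pin_eq.
have Fk_nz : F k != 0 by apply: Fnz; lia.
have Fa_nz : F a != 0 by apply: Fnz.
have Fk1_nz : F k.+1 != 0 by apply: Fnz; lia.
have bk1_nz : lin (beta C i k.+1) != 0.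
  apply/eqP => E; move: hBk1; rewrite E mul0r => /eqP; rewrite mulf_eq0.
  by rewrite (negbTE Fk1_nz) (negbTE Fa_nz).
have jm'_k' := jm'_k _ _ _ _ _ _ hk1 hkN hp1 hq hp2 pq.
have jm'_k1' := jm'_k1 _ _ _ _ _ _ hk1 hkN hp1 hq hp2 pq.
have jm'_k2' := jm'_k2 _ _ _ _ _ _ hk1 hkN hp1 hq hp2 pq.
have jplus'_k' := jplus'_k _ _ _ _ _ _ hk1 hkN hp1 hq hp2 pq.
have jplus'_k1' := jplus'_k1 _ _ _ _ _ _ hk1 hkN hp1 hq hp2 pq.
have jplus'_k2' := jplus'_k2 _ _ _ _ _ _ hk1 hkN hp1 hq hp2 pq.
have jplus_k2_gt' := jplus_k2_gt _ _ _ _ _ _ hk1 hkN hp1 hq hp2 pq.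
have Pa_eq : Pnew C i N P k a = F a.
  by rewrite Pnew_id ?sk_id //; apply/eqP; lia.
have Pb_eq : Pnew C i N P k b = F b.
  by rewrite Pnew_id ?sk_id //; apply/eqP; lia.
have Pk1_eq : Pnew C i N P k k.+1 = F k.+2.
  by rewrite Pnew_id /sk ?eqxx //; apply/eqP; lia.
have Pk2_eq : Pnew C i N P k k.+2 = F k.+1.
  rewrite Pnew_id /sk ?eqxx //; last by apply/eqP; lia.
  by have -> : (k.+2 == k.+1) = false by lia.
have Pj : j != k -> j != k.+1 -> j != k.+2 -> Pnew C i N P k j = F j.
  by move=> h0 h1 h2; rewrite Pnew_id // sk_o.
have mj : (jminus i j < j)%N := Mx_lt (fun l => i l == i j) j j1.
have [jk|kj] := ltnP j k.
  have jm := jm_lt _ _ _ _ _ _ hk1 hkN hp1 hq hp2 pq j jk.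
  rewrite jm Pj; try (apply/eqP; lia).
  have -> : Pnew C i N P k (jminus i j) = F (jminus i j).
    by rewrite Pnew_id ?sk_o //; apply/eqP; lia.
  rewrite beta_lt // br_lt' //.
  have -> : \prod_(1 <= l < j | (j < jplus (braid i k p q) N l)%N &&
                (C (braid i k p q l) (i j) == -1)) Pnew C i N P k l =
            \prod_(1 <= l < j | (j < jplus i N l)%N && (C (i l) (i j) == -1)) F l.
    rewrite big_mkcond [RHS]big_mkcond; apply: eq_big_nat => l /andP[l0 lj].
    have lk : (l < k)%N by lia.
    have -> : Pnew C i N P k l = F l by rewrite Pnew_id ?sk_o //; apply/eqP; lia.
    rewrite br_lt' //; congr (if _ then _ else _).
    case: (Rel_l' l lk) => [[E [HH|HH]]|[E0 E1 E2]|[E0 E1 E2]];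
      rewrite ?E ?E0 ?E1 ?E2 ?Cpp ?Cqq ?Cpq ?Cqp ?eqxx ?(negbTE pq) ?(negbTE qp) /=; lia.
  by apply: hB; rewrite j1.
rewrite leq_eqVlt in kj; case/orP: kj => [/eqP ej|kj].
  subst j; rewrite jm'_k' -/a Pa_eq br_k' H4 beta_k Pk_eq.
  exact: (alg_k _ _ _ _ _ _ _ _ _ _ _ Fk_nz Fa_nz bk1_nz hBk hBk1 hBk2).
rewrite leq_eqVlt in kj; case/orP: kj => [/eqP ej|kj].
  subst j; rewrite jm'_k1' -/b Pb_eq Pk1_eq beta_k1 big_mkcond big_nat_recr //= -big_mkcond.
  rewrite jplus'_k' br_k' br_k1' Cqp ltnSn eqxx /= H5 Pk_eq.
  exact: (alg_k1 _ _ _ _ _ _ _ _ Fk_nz bk1_nz hBk).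
rewrite leq_eqVlt in kj; case/orP: kj => [/eqP ej|kj].
  subst j; rewrite jm'_k2' Pk2_eq beta_k2 big_mkcond big_nat_recr //= big_nat_recr //= -big_mkcond.
  rewrite jplus'_k' jplus'_k1' br_k' br_k1' br_k2' hpq ltnn jplus_k2_gt' eqxx /= mulr1 H6 Pk1_eq Pk_eq.
  exact: (alg_k2 _ _ _ _ _ _ _ _ Fk_nz Fa_nz bk1_nz hBk1).
have jm := jm_gt _ _ _ _ _ _ hk1 hkN hp1 hq hp2 pq j kj.
have jplus_far' := jplus_far _ _ _ _ _ _ hk1 hkN hp1 hq hp2 pq.
have kj0 : (k < j)%N by lia.
have mk : jminus i j != k.
  apply/negP => /eqP E.
  have S : (jminus i j == k) = _ := Mx_spec (fun l => i l == i j) k j hk1 kj0.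
  move: S; rewrite E eqxx => /esym/andP[/eqP ikj /hasPn H].
  have : k.+2 \in iota k.+1 (j - k.+1) by rewrite mem_iota; lia.
  by move/H; rewrite hp2 -ikj hp1 eqxx.
rewrite jm Pj; try (apply/eqP; lia).
rewrite Pnew_id ?sk_inv; last exact: sk_neq.
rewrite beta_gt // br_gt' //.
have -> : \prod_(1 <= l < j | (j < jplus (braid i k p q) N l)%N &&
              (C (braid i k p q l) (i j) == -1)) Pnew C i N P k l =
          \prod_(1 <= l < j | (j < jplus i N l)%N && (C (i l) (i j) == -1)) F l.
  rewrite big_mkcond [RHS]big_mkcond (split3 _ _ _ _ hk1 kj) [RHS](split3 _ _ _ _ hk1 kj).
  rewrite jplus'_k' jplus_k' jplus'_k1' jplus'_k2' br_k1' br_k2' hq hp2 Pk1_eq Pk2_eq.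
  have jk2 : (j < k.+2)%N = false by lia.
  rewrite jk2 /= !mul1r; congr (_ * _).
    apply: eq_big_nat => l /andP[l0 lk].
    have -> : Pnew C i N P k l = F l by rewrite Pnew_id ?sk_o //; apply/eqP; lia.
    rewrite br_lt' //; congr (if _ then _ else _).
    case: (Rel_l' l lk) => [[E [HH|HH]]|[E0 E1 E2]|[E0 E1 E2]];
      rewrite ?E ?E0 ?E1 ?E2 ?Cpp ?Cqq ?Cpq ?Cqp ?eqxx ?(negbTE pq) ?(negbTE qp) /=; lia.
  rewrite mulrCA; congr (_ * (_ * _)).
  apply: eq_big_nat => l /andP[kl lj].
  have -> : Pnew C i N P k l = F l by rewrite Pnew_id ?sk_o //; apply/eqP; lia.
  by rewrite br_gt' ?jplus_far' //.
by apply: hB; rewrite j1.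
Qed.
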